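(* Let $k$ be a field and let $A$ be a $k$-algebra with two graded algebra decompositions $A=\bigoplus_{i=0}^{\infty}A_i=\bigoplus_{i=0}^{\infty}B_i$ (each a grading making $A$ a graded algebra) such that (1) $A_0=B_0=k$; (2) $A$ is generated as an algebra by $A_1$, and also generated as an algebra by $B_1$; (3) either $A_1$ or $B_1$ is finite dimensional over $k$. Then there is an algebra automorphism $\phi:A\to A$ such that $\phi(A_i)=B_i$ for all $i$.
   Context: All algebras are associative unital $k$-algebras. *)

(* Defs.v *)
From HB Require Import structures.
From mathcomp Require Import all_boot all_order all_algebra.
Set Implicit Arguments. Unset Strict Implicit. Unset Printing Implicit Defensive.
Import GRing.Theory.
Local Open Scope ring_scope.

Section Grading.
Variables (k : fieldType) (A : algType k).

Definition subspace (S : A -> Prop) : Prop :=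
  S 0 /\ (forall (c : k) x y, S x -> S y -> S (c *: x + y)).

Definition is_algebra_grading (G : nat -> A -> Prop) : Prop :=
  [/\ forall i, subspace (G i),
      forall a : A, exists (n : nat) (c : nat -> A),
        (forall i, G i (c i)) /\ a = \sum_(i < n) c i,
      forall (n : nat) (c : nat -> A),
        (forall i, G i (c i)) -> \sum_(i < n) c i = 0 ->
        forall i, (i < n)%N -> c i = 0,
      G 0 1 &
      forall i j x y, G i x -> G j y -> G (i + j)%N (x * y)].

Definition degree0_is_scalars (G : nat -> A -> Prop) : Prop :=
  forall x, G 0 x <-> exists c : k, x = c%:A.

Definition subalgebra (S : A -> Prop) : Prop :=
  [/\ S 1, subspace S & forall x y, S x -> S y -> S (x * y)].

Definition generates_algebra (X : A -> Prop) : Prop :=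
  forall S, subalgebra S -> (forall x, X x -> S x) -> forall a, S a.

Definition finite_dimensional (X : A -> Prop) : Prop :=
  exists s : seq A, (forall x, x \in s -> X x) /\
    forall x, X x -> exists c : 'I_(size s) -> k, x = \sum_(i < size s) c i *: s`_i.

End Grading.

(* Main.v *)
Require Import Defs.
From HB Require Import structures.
From mathcomp Require Import all_boot all_order all_algebra.
From Stdlib Require Import Classical ClassicalEpsilon.
Import GRing.Theory.
Local Open Scope ring_scope.
Set Implicit Arguments. Unset Strict Implicit. Unset Printing Implicit Defensive.

Section LinAlg.
Variables (k : fieldType) (A : algType k).

Inductive ispan (xs : seq A) : A -> Prop :=
| isp0 : ispan xs 0
| ispC (c : k) x a : x \in xs -> ispan xs a -> ispan xs (c *: x + a).

Lemma ispan_mem xs x : x \in xs -> ispan xs x.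
Proof. by move=> xx; rewrite -[x]addr0 -[x]scale1r; constructor => //; constructor. Qed.

Lemma ispan_lin xs (c : k) a b : ispan xs a -> ispan xs b -> ispan xs (c *: a + b).
Proof.
elim=> [|d x a' xx _ IH] sb; first by rewrite scaler0 add0r.
by rewrite scalerDr -addrA scalerA; constructor => //; apply: IH.
Qed.

Lemma ispan_add xs a b : ispan xs a -> ispan xs b -> ispan xs (a + b).
Proof. by move=> *; rewrite -[a]scale1r; apply: ispan_lin. Qed.

Lemma ispan_scale xs (c : k) a : ispan xs a -> ispan xs (c *: a).
Proof. by move=> *; rewrite -[_ *: a]addr0; apply: ispan_lin => //; constructor. Qed.

Lemma ispan_sub xs ys a : {subset xs <= ys} -> ispan xs a -> ispan ys a.
Proof. by move=> sub; elim=> *; constructor; auto. Qed.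

Lemma ispan_map xs (f : A -> A) a :
  (forall (c : k) x y, f (c *: x + y) = c *: f x + f y) ->
  ispan xs a -> ispan (map f xs) (f a).
Proof.
move=> fl.
have f0 : f 0 = 0.
  by have := fl 1 0 0; rewrite !scale1r !addr0 => /(congr1 (fun z => z - f 0)); rewrite subrr addrK => h; rewrite -h.
elim=> [|c x a' xx _ IH]; first by rewrite f0; constructor.
by rewrite fl; constructor => //; apply: map_f.
Qed.

Lemma ispan_mul xs ys zs a b :
  (forall x y, x \in xs -> y \in ys -> x * y \in zs) ->
  ispan xs a -> ispan ys b -> ispan zs (a * b).
Proof.
move=> hm; elim=> [|c x a' xx _ IH] sb; first by rewrite mul0r; constructor.
rewrite mulrDl -scalerAl; apply: ispan_lin; last exact: IH.
elim: sb => [|d y b' yy _ IH2]; first by rewrite mulr0; constructor.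
by rewrite mulrDr -scalerAr; constructor; auto.
Qed.

Lemma ispan_ind2 (X : A -> Prop) xs :
  X 0 -> (forall (c : k) x y, X x -> X y -> X (c *: x + y)) ->
  (forall x, x \in xs -> X x) -> forall a, ispan xs a -> X a.
Proof. by move=> X0 Xl Xs a; elim=> // *; apply: Xl; auto. Qed.

Lemma ispan_sumE xs a :
  ispan xs a <-> exists c : nat -> k, a = \sum_(i < size xs) c i *: xs`_i.
Proof.
split.
  elim=> [|c x a' xx _ [d ->]].
    by exists (fun _ => 0); rewrite big1 // => i _; rewrite scale0r.
  exists (fun i => if i == index x xs then c + d i else d i).
  have ix : (index x xs < size xs)%N by rewrite index_mem.
  rewrite (bigD1 (Ordinal ix)) //= [in RHS](bigD1 (Ordinal ix)) //= eqxx.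
  rewrite nth_index // scalerDl -addrA; congr (_ + (_ + _)).
  apply: eq_bigr => i /eqP ne; case: eqP => // h; exfalso; apply: ne.
  by apply: val_inj.
move=> [c ->]; elim/big_ind: _ => //; first by constructor.
  by move=> *; apply: ispan_add.
move=> i _; apply: ispan_scale; apply: ispan_mem; apply: mem_nth; exact: ltn_ord.
Qed.

Definition indep (bs : seq A) :=
  forall c : nat -> k, \sum_(i < size bs) c i *: bs`_i = 0 ->
  forall i, (i < size bs)%N -> c i = 0.

Lemma basis_exists xs : exists bs, indep bs /\ forall a, ispan bs a <-> ispan xs a.
Proof.
elim: xs => [|x xs [bs [ib hbs]]].
  by exists [::]; split => // c _ i.
have [xin|xnin] := classic (ispan bs x).
  exists bs; split => // a; split.
    by move/hbs => sa; apply: ispan_sub sa => y yy; rewrite inE yy orbT.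
  move=> sa; apply: (ispan_ind2 (X := ispan bs)) sa; first by constructor.
    by move=> c y z *; apply: ispan_lin.
  move=> y; rewrite inE => /orP [/eqP ->|yy] //.
  by apply/hbs; apply: ispan_mem.
exists (x :: bs); split.
  move=> c; rewrite big_ord_recl /= => hs.
  have c0 : c 0%N = 0.
    case: (eqVneq (c 0%N) 0) => // cn0; exfalso; apply: xnin.
    set S := \sum_(i < size bs) _ in hs.
    have e : c 0%N *: x = - S by apply/eqP; rewrite -addr_eq0 hs.
    have -> : x = - (c 0%N)^-1 *: S by rewrite scaleNr -scalerN -e scalerA mulVf // scale1r.
    apply: ispan_scale; apply/ispan_sumE; exists (fun i => c i.+1).
    by apply: eq_bigr => i _; rewrite /= /bump leq0n.
  move: hs; rewrite c0 scale0r add0r => hs [|i] //= ilt.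
  exact: (ib (fun i => c i.+1) hs i ilt).
move=> a; split.
  move=> sa; apply: (ispan_ind2 (X := ispan (x :: xs))) sa; first by constructor.
    by move=> c y z *; apply: ispan_lin.
  move=> y; rewrite inE => /orP [/eqP ->|yy]; first by apply: ispan_mem; rewrite inE eqxx.
  by have := (ispan_mem yy) => /hbs sy; apply: ispan_sub sy => z zz; rewrite inE zz orbT.
move=> sa; apply: (ispan_ind2 (X := ispan (x :: bs))) sa; first by constructor.
  by move=> c y z *; apply: ispan_lin.
move=> y; rewrite inE => /orP [/eqP ->|yy]; first by apply: ispan_mem; rewrite inE eqxx.
by have := (ispan_mem yy) => /hbs sy; apply: ispan_sub sy => z zz; rewrite inE zz orbT.
Qed.


Lemma lin0 (L : A -> A) :
  (forall (c : k) x y, L (c *: x + y) = c *: L x + L y) -> L 0 = 0.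
Proof.
move=> fl.
by have := fl 1 0 0; rewrite !scale1r !addr0 => /(congr1 (fun z => z - L 0)); rewrite subrr addrK => h; rewrite -h.
Qed.

Lemma lin_sum (L : A -> A) (n : nat) (c : nat -> k) (F : nat -> A) :
  (forall (c : k) x y, L (c *: x + y) = c *: L x + L y) ->
  L (\sum_(i < n) c i *: F i) = \sum_(i < n) c i *: L (F i).
Proof.
move=> fl; elim: n => [|n IH]; first by rewrite !big_ord0 lin0.
by rewrite !big_ord_recr /= addrC fl IH addrC.
Qed.

Lemma surj_inj (xs : seq A) (X : A -> Prop) (L : A -> A) :
  (forall (c : k) x y, L (c *: x + y) = c *: L x + L y) ->
  (forall a, X a <-> ispan xs a) ->
  (forall x, X x -> X (L x)) ->
  (forall x, X x -> exists y, X y /\ L y = x) ->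
  forall y, X y -> L y = 0 -> y = 0.
Proof.
move=> Ll hX LX Ls.
have [bs [ib hbs]] := basis_exists xs.
set r := size bs.
have Xb a : X a <-> exists c : nat -> k, a = \sum_(i < r) c i *: bs`_i.
  by rewrite hX -hbs ispan_sumE.
have L0 := lin0 Ll.
have Xbs i : X bs`_i.
  case: (ltnP i r) => ir; first by apply/hX/hbs/ispan_mem/mem_nth.
  by rewrite nth_default //; apply/hX; constructor.
have hm i : exists c : nat -> k, L bs`_i = \sum_(j < r) c j *: bs`_j.
  by apply/Xb/LX.
have hd i : exists c : nat -> k, L (\sum_(l < r) c l *: bs`_l) = bs`_i.
  have [y [Xy Ly]] := Ls _ (Xbs i).
  by move: Xy => /Xb [c yE]; exists c; rewrite -yE.
pose m i := proj1_sig (constructive_indefinite_description _ (hm i)).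
pose d i := proj1_sig (constructive_indefinite_description _ (hd i)).
have mE i : L bs`_i = \sum_(j < r) m i j *: bs`_j.
  exact: (proj2_sig (constructive_indefinite_description _ (hm i))).
have dE i : L (\sum_(l < r) d i l *: bs`_l) = bs`_i.
  exact: (proj2_sig (constructive_indefinite_description _ (hd i))).
have form (c : nat -> k) : L (\sum_(l < r) c l *: bs`_l) =
    \sum_(j < r) (\sum_(l < r) c l * m l j) *: bs`_j.
  rewrite lin_sum //.
  under eq_bigr => l _ do rewrite mE scaler_sumr.
  rewrite exchange_big /=; apply: eq_bigr => j _.
  by rewrite scaler_suml; apply: eq_bigr => l _; rewrite scalerA.
have uniq_coef (c1 c2 : nat -> k) :
    \sum_(j < r) c1 j *: bs`_j = \sum_(j < r) c2 j *: bs`_j ->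
    forall j, (j < r)%N -> c1 j = c2 j.
  move=> e j jr; apply/eqP; rewrite -subr_eq0; apply/eqP.
  apply: (ib (fun j => c1 j - c2 j)) => //.
  under eq_bigr => i _ do rewrite scalerBl.
  by rewrite sumrB e subrr.
pose M : 'M[k]_r := \matrix_(l, j) m l j.
pose D : 'M[k]_r := \matrix_(i, l) d i l.
have DM : D *m M = 1%:M.
  apply/matrixP => i j; rewrite !mxE.
  have := dE i; rewrite form => e.
  have e2 : bs`_i = \sum_(j < r) ((i == j :> nat)%:R : k) *: bs`_j.
    rewrite (bigD1 i) //= eqxx scale1r big1 ?addr0 // => l /negbTE ne.
    by rewrite -(inj_eq val_inj) in ne; rewrite eq_sym ne scale0r.
  rewrite e2 in e.
  have := uniq_coef (fun j => \sum_(l < r) d i l * m l j) (fun j : nat => ((i == j :> nat)%:R : k)) e j (ltn_ord j).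
  move=> /= h; rewrite (inj_eq val_inj) in h; rewrite -h.
  by apply: eq_bigr => l _; rewrite !mxE.
have MD := mulmx1C DM.
move=> y /Xb [c ->] Ly.
rewrite form in Ly.
have z : forall j, (j < r)%N -> \sum_(l < r) c l * m l j = 0.
  move=> j jr; apply: (uniq_coef (fun j => \sum_(l < r) c l * m l j) (fun _ => 0)) => //.
  by rewrite Ly big1 // => i _; rewrite scale0r.
pose cr : 'rV[k]_r := \row_l c l.
have crM : cr *m M = 0.
  apply/matrixP => i j; rewrite !mxE -[RHS](z j (ltn_ord j)).
  by apply: eq_bigr => l _; rewrite !mxE.
have cr0 : cr = 0 by rewrite -[cr]mulmx1 -MD mulmxA crM mul0mx.
apply: big1 => i _.
have : cr 0 i = 0 by rewrite cr0 mxE.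
by rewrite mxE => ->; rewrite scale0r.
Qed.

End LinAlg.


Section Grad.
Variables (k : fieldType) (A : algType k) (G : nat -> A -> Prop).
Variable hG : is_algebra_grading G.

Lemma Gsub i : subspace (G i). Proof. by case: hG. Qed.
Lemma Gdec a : exists (n : nat) (c : nat -> A), (forall i, G i (c i)) /\ a = \sum_(i < n) c i.
Proof. by case: hG. Qed.
Lemma Gdir (n : nat) (c : nat -> A) : (forall i, G i (c i)) -> \sum_(i < n) c i = 0 ->
  forall i, (i < n)%N -> c i = 0.
Proof. by case: hG => _ _ h _ _; apply: h. Qed.
Lemma G01 : G 0 1. Proof. by case: hG. Qed.
Lemma GM i j x y : G i x -> G j y -> G (i + j)%N (x * y).
Proof. by case: hG => _ _ _ _; apply. Qed.

Lemma G0 i : G i 0. Proof. by case: (Gsub i). Qed.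
Lemma Glin i (c : k) x y : G i x -> G i y -> G i (c *: x + y).
Proof. by case: (Gsub i) => _; apply. Qed.
Lemma GD i x y : G i x -> G i y -> G i (x + y).
Proof. by move=> *; rewrite -[x]scale1r; apply: Glin. Qed.
Lemma GZ i (c : k) x : G i x -> G i (c *: x).
Proof. by move=> *; rewrite -[_ *: x]addr0; apply: Glin => //; apply: G0. Qed.
Lemma GN i x : G i x -> G i (- x).
Proof. by move=> *; rewrite -scaleN1r; apply: GZ. Qed.
Lemma GB i x y : G i x -> G i y -> G i (x - y).
Proof. by move=> *; apply: GD => //; apply: GN. Qed.

Definition bnd a := proj1_sig (constructive_indefinite_description _ (Gdec a)).
Lemma bnd_spec a : exists c : nat -> A, (forall i, G i (c i)) /\ a = \sum_(i < bnd a) c i.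
Proof. exact: (proj2_sig (constructive_indefinite_description _ (Gdec a))). Qed.
Definition cf a := proj1_sig (constructive_indefinite_description _ (bnd_spec a)).
Lemma cf_spec a : (forall i, G i (cf a i)) /\ a = \sum_(i < bnd a) cf a i.
Proof. exact: (proj2_sig (constructive_indefinite_description _ (bnd_spec a))). Qed.

Definition comp i a := if (i < bnd a)%N then cf a i else 0.

Lemma compG i a : G i (comp i a).
Proof. by rewrite /comp; case: ifP => _; [apply: (proj1 (cf_spec a)) | apply: G0]. Qed.

Lemma comp_ge i a : (bnd a <= i)%N -> comp i a = 0.
Proof. by rewrite /comp leqNgt => /negbTE ->. Qed.

Lemma sum_widen (n N : nat) (F : nat -> A) : (n <= N)%N ->
  \sum_(i < n) F i = \sum_(i < N) (if (i < n)%N then F i else 0).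
Proof. by move=> nN; rewrite (big_ord_widen _ _ nN) big_mkcond. Qed.

Lemma comp_sum a N : (bnd a <= N)%N -> a = \sum_(i < N) comp i a.
Proof. by move=> bN; rewrite {1}(proj2 (cf_spec a)) (sum_widen _ bN). Qed.

Lemma comp_uniq a (n : nat) (c : nat -> A) : (forall i, G i (c i)) -> a = \sum_(i < n) c i ->
  forall i, comp i a = if (i < n)%N then c i else 0.
Proof.
move=> Gc aE i.
pose N := maxn n (bnd a).
pose e j := (if (j < n)%N then c j else 0) - comp j a.
have Ge j : G j (e j) by apply: GB; [case: ifP => _; [apply: Gc|apply: G0] | apply: compG].
have se : \sum_(j < N) e j = 0.
  rewrite sumrB -sum_widen ?leq_maxl // -aE -comp_sum ?leq_maxr //.
  by rewrite subrr.
case: (ltnP i N) => iN.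
  by have := Gdir Ge se iN; move/eqP; rewrite subr_eq0 => /eqP.
rewrite comp_ge; last by apply: leq_trans iN; apply: leq_maxr.
by rewrite ifN // -leqNgt; apply: leq_trans iN; apply: leq_maxl.
Qed.

Lemma sum_single (N : nat) (i0 : 'I_N) (F : 'I_N -> A) :
  (forall j : 'I_N, (j : nat) != i0 -> F j = 0) -> \sum_(j < N) F j = F i0.
Proof.
move=> h; rewrite (bigD1 i0) //= big1 ?addr0 // => j ne; apply: h.
Qed.
Arguments sum_single {N} i0 {F}.

Lemma comp_hom i j x : G j x -> comp i x = if i == j then x else 0.
Proof.
move=> Gx; rewrite (@comp_uniq x j.+1 (fun l => if l == j then x else 0)).
- by case: ifP => // ij; case: eqP => // eij; rewrite eij ltnSn in ij.
- by move=> l; case: eqP => [->|_] //; apply: G0.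
- by rewrite (sum_single (Ordinal (ltnSn j))) /= ?eqxx // => l /negbTE ->.
Qed.

Lemma comp_lin i (c : k) x y : comp i (c *: x + y) = c *: comp i x + comp i y.
Proof.
pose N := maxn (bnd x) (bnd y).
rewrite (@comp_uniq (c *: x + y) N (fun l => c *: comp l x + comp l y)).
- case: ltnP => // h; rewrite !comp_ge ?scaler0 ?addr0 //; apply: leq_trans h.
    exact: leq_maxr.
  exact: leq_maxl.
- by move=> l; apply: Glin; apply: compG.
- rewrite big_split /= -scaler_sumr -!comp_sum //; [exact: leq_maxr|exact: leq_maxl].
Qed.

Lemma comp0 i : comp i 0 = 0.
Proof. by rewrite (comp_hom i (G0 0)) if_same. Qed.
Lemma compD i x y : comp i (x + y) = comp i x + comp i y.
Proof. by have := comp_lin i 1 x y; rewrite !scale1r. Qed.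
Lemma compZ i (c : k) x : comp i (c *: x) = c *: comp i x.
Proof. by rewrite -[c *: x]addr0 comp_lin comp0 addr0. Qed.
Lemma compN i x : comp i (- x) = - comp i x.
Proof. by rewrite -scaleN1r compZ scaleN1r. Qed.
Lemma compB i x y : comp i (x - y) = comp i x - comp i y.
Proof. by rewrite compD compN. Qed.
Lemma comp_big i (I : Type) (r : seq I) (P : pred I) (F : I -> A) :
  comp i (\sum_(l <- r | P l) F l) = \sum_(l <- r | P l) comp i (F l).
Proof. exact: (big_morph (comp i) (compD i) (comp0 i)). Qed.
Lemma comp_comp i j a : comp i (comp j a) = if i == j then comp j a else 0.
Proof. exact: comp_hom (compG _ _). Qed.

Lemma comp_mul p x y N : (bnd x <= N)%N -> (bnd y <= N)%N ->
  comp p (x * y) = \sum_(l < N) \sum_(m < N)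
     (if (l + m == p)%N then comp l x * comp m y else 0).
Proof.
move=> bx byy; rewrite {1}(comp_sum bx) {1}(comp_sum byy) mulr_suml comp_big.
apply: eq_bigr => l _; rewrite mulr_sumr comp_big; apply: eq_bigr => m _.
by rewrite (comp_hom _ (GM (compG l x) (compG m y))) eq_sym.
Qed.

Definition Ge j a := forall i, (i < j)%N -> comp i a = 0.
Definition Le j a := forall i, (j < i)%N -> comp i a = 0.

Lemma Ge_lin j (c : k) x y : Ge j x -> Ge j y -> Ge j (c *: x + y).
Proof. by move=> hx hy i ij; rewrite comp_lin hx ?hy ?scaler0 ?addr0. Qed.
Lemma Le_lin j (c : k) x y : Le j x -> Le j y -> Le j (c *: x + y).
Proof. by move=> hx hy i ij; rewrite comp_lin hx ?hy ?scaler0 ?addr0. Qed.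
Lemma Ge0 j : Ge j 0. Proof. by move=> i _; rewrite comp0. Qed.
Lemma Le0 j : Le j 0. Proof. by move=> i _; rewrite comp0. Qed.
Lemma GeD j x y : Ge j x -> Ge j y -> Ge j (x + y).
Proof. by move=> *; rewrite -[x]scale1r; apply: Ge_lin. Qed.
Lemma LeD j x y : Le j x -> Le j y -> Le j (x + y).
Proof. by move=> *; rewrite -[x]scale1r; apply: Le_lin. Qed.
Lemma GeZ j (c : k) x : Ge j x -> Ge j (c *: x).
Proof. by move=> *; rewrite -[_ *: x]addr0; apply: Ge_lin => //; apply: Ge0. Qed.
Lemma LeZ j (c : k) x : Le j x -> Le j (c *: x).
Proof. by move=> *; rewrite -[_ *: x]addr0; apply: Le_lin => //; apply: Le0. Qed.
Lemma GeB j x y : Ge j x -> Ge j y -> Ge j (x - y).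
Proof. by move=> *; apply: GeD => //; rewrite -scaleN1r; apply: GeZ. Qed.
Lemma LeB j x y : Le j x -> Le j y -> Le j (x - y).
Proof. by move=> *; apply: LeD => //; rewrite -scaleN1r; apply: LeZ. Qed.
Lemma Ge_mono i j x : (i <= j)%N -> Ge j x -> Ge i x.
Proof. by move=> ij h l li; apply: h; apply: leq_trans ij. Qed.
Lemma Le_mono i j x : (i <= j)%N -> Le i x -> Le j x.
Proof. by move=> ij h l li; apply: h; apply: leq_ltn_trans li. Qed.
Lemma G_Ge j x : G j x -> Ge j x.
Proof. by move=> Gx i ij; rewrite (comp_hom _ Gx) ifN // neq_ltn ij. Qed.
Lemma G_Le j x : G j x -> Le j x.
Proof. by move=> Gx i ij; rewrite (comp_hom _ Gx) ifN // neq_ltn ij orbT. Qed.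
Lemma Ge_0 x : Ge 0 x. Proof. by []. Qed.

Lemma GeM i j x y : Ge i x -> Ge j y -> Ge (i + j) (x * y).
Proof.
move=> hx hy p pij; rewrite (@comp_mul p x y (maxn (bnd x) (bnd y))) ?leq_maxl ?leq_maxr //.
apply: big1 => l _; apply: big1 => m _; case: eqP => // e.
case: (ltnP l i) => li; first by rewrite hx ?mul0r.
rewrite hy ?mulr0 //; rewrite -e in pij; rewrite -(ltn_add2l l); apply: leq_trans pij _.
by rewrite leq_add2r.
Qed.

Lemma LeM i j x y : Le i x -> Le j y -> Le (i + j) (x * y).
Proof.
move=> hx hy p pij; rewrite (@comp_mul p x y (maxn (bnd x) (bnd y))) ?leq_maxl ?leq_maxr //.
apply: big1 => l _; apply: big1 => m _; case: eqP => // e.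
case: (ltnP i l) => li; first by rewrite hx ?mul0r.
rewrite hy ?mulr0 //; rewrite -e in pij; rewrite -(ltn_add2l l); apply: leq_ltn_trans pij.
by rewrite leq_add2r.
Qed.

Lemma LeM_top i j x y : Le i x -> Le j y -> comp (i + j) (x * y) = comp i x * comp j y.
Proof.
move=> hx hy.
pose N := maxn (maxn (bnd x) (bnd y)) (i + j).+1.
have bx : (bnd x <= N)%N by rewrite /N !leq_max leqnn.
have byy : (bnd y <= N)%N by rewrite /N !leq_max leqnn orbT.
have iN : (i < N)%N by rewrite /N leq_max; apply/orP; right; rewrite ltnS leq_addr.
have jN : (j < N)%N by rewrite /N leq_max; apply/orP; right; rewrite ltnS leq_addl.
rewrite (comp_mul _ bx byy) (sum_single (Ordinal iN)) /=.
  rewrite (sum_single (Ordinal jN)) /= ?eqxx // => m mj; case: eqP => // /eqP.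
  by rewrite eqn_add2l (negbTE mj).
move=> l li; apply: big1 => m _; case: eqP => // e.
case: (ltnP i l) => il; first by rewrite hx ?mul0r.
have : (l < i)%N by rewrite ltn_neqAle li.
move=> lti; rewrite hy ?mulr0 //; rewrite -(ltn_add2l l) e; by rewrite ltn_add2r.
Qed.

Definition tr j a := \sum_(i < j.+1) comp i a.

Lemma tr_lin j (c : k) x y : tr j (c *: x + y) = c *: tr j x + tr j y.
Proof. by rewrite /tr scaler_sumr -big_split; apply: eq_bigr => i _; rewrite comp_lin. Qed.

Lemma comp_tr i j a : comp i (tr j a) = if (i <= j)%N then comp i a else 0.
Proof.
rewrite /tr comp_big; under eq_bigr => l _ do rewrite comp_comp.
case: leqP => ij.
  by rewrite (sum_single (Ordinal (ij : (i < j.+1)%N))) /= ?eqxx // => l ne; rewrite eq_sym (negbTE ne).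
by apply: big1 => l _; case: eqP => // e; move: (ltn_ord l); rewrite -e ltnS leqNgt ij.
Qed.

Lemma Le_tr j a : Le j (tr j a).
Proof. by move=> i ji; rewrite comp_tr leqNgt ji. Qed.

Lemma tr_Le j a : Le j a -> tr j a = a.
Proof.
move=> h; pose N := maxn (bnd a) j.+1.
rewrite [RHS](@comp_sum a N) ?leq_maxl // /tr (@sum_widen j.+1 N (fun i => comp i a)) ?leq_maxr //.
by apply: eq_bigr => i _; case: ltnP => // ji; rewrite h.
Qed.

Lemma tr_Ge j a : Ge j.+1 a -> tr j a = 0.
Proof. by move=> h; apply: big1 => i _; apply: h. Qed.

Lemma Ge_sub_tr j a : Ge j.+1 (a - tr j a).
Proof. by move=> i ij; rewrite compB comp_tr -ltnS ij subrr. Qed.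

Lemma Le_G0 x : G 0 x -> forall j, Le j x.
Proof. by move=> h j; apply: Le_mono (G_Le h). Qed.

End Grad.
Arguments sum_single {k A N} i0 {F}.


Section Dec.
Variables (k : fieldType) (A : algType k) (G H : nat -> A -> Prop).
Variables (hG : is_algebra_grading G) (hH : is_algebra_grading H).
Variables (dG : degree0_is_scalars G) (dH : degree0_is_scalars H).
Variable genH : generates_algebra (H 1%N).

Let Z l z := Le hH l z /\ Ge hG l z.
Let Sp (a : A) := exists zs : seq (nat * A), (forall p, p \in zs -> Z p.1 p.2) /\ a = \sum_(p <- zs) p.2.

Lemma Sp_all a : Sp a.
Proof.
apply: genH.
- split.
  + exists [:: (0%N, 1)]; split; last by rewrite big_seq1.
    move=> p; rewrite inE => /eqP -> /=; split; last by [].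
    exact: G_Le (G01 hH).
  + split; first by exists [::]; rewrite big_nil.
    move=> c x y [zx [hx ->]] [zy [hy ->]].
    exists ([seq (p.1, c *: p.2) | p <- zx] ++ zy); split.
      move=> p; rewrite mem_cat => /orP [/mapP [q qin ->]|pin] /=; last exact: hy.
      by have [h1 h2] := hx q qin; split; [apply: LeZ|apply: GeZ].
    by rewrite big_cat big_map /= scaler_sumr.
  + move=> x y [zx [hx ->]] [zy [hy ->]].
    exists [seq ((p.1 + q.1)%N, p.2 * q.2) | p <- zx, q <- zy]; split.
      move=> r /allpairsP [[p q] [pin qin ->]] /=.
      have [h1 h2] := hx p pin; have [h3 h4] := hy q qin.
      by split; [apply: LeM|apply: GeM].
    rewrite big_allpairs_dep /= mulr_suml.
    by apply: eq_bigr => p _; rewrite mulr_sumr.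
- move=> b Hb.
  have [e eE] : exists e : k, comp hG 0 b = e%:A by apply/dG; apply: compG.
  have He : H 0 (e%:A) by apply/dH; exists e.
  exists [:: (0%N, e%:A); (1%N, b - e%:A)]; split; last first.
    by rewrite big_cons big_seq1 addrC subrK.
  move=> p; rewrite !inE => /orP [/eqP -> | /eqP ->] /=.
    by split; [exact: G_Le He|].
  split.
    by apply: LeB; [exact: G_Le Hb| exact: Le_G0 He 1%N].
  move=> i; rewrite ltnS leqn0 => /eqP ->.
  have HeG : G 0%N e%:A by apply/dG; exists e.
  by rewrite compB eE (comp_hom hG 0 HeG) /= subrr.
Qed.

Lemma Dec a j : exists b, Le hH j b /\ Ge hG j.+1 (a - b).
Proof.
have [zs [hz ->]] := Sp_all a.
exists (\sum_(p <- zs | (p.1 <= j)%N) p.2); split.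
  rewrite big_seq_cond; apply: (big_ind (Le hH j)); first exact: Le0.
    by move=> *; apply: LeD.
  move=> p /andP [pin pj]; have [h1 _] := hz p pin; exact: Le_mono pj h1.
rewrite (bigID (fun p => (p.1 <= j)%N)) /= addrC addrK.
rewrite big_seq_cond; apply: (big_ind (Ge hG j.+1)); first exact: Ge0.
  by move=> *; apply: GeD.
move=> p /andP [pin pj]; have [_ h2] := hz p pin; apply: Ge_mono h2.
by rewrite ltnNge.
Qed.

End Dec.

Section Span.
Variables (k : fieldType) (A : algType k) (G : nat -> A -> Prop).
Variables (hG : is_algebra_grading G) (genG : generates_algebra (G 1%N)).
Variables (s : seq A) (sG : forall x, x \in s -> G 1%N x) (Gs : forall x, G 1%N x -> ispan s x).

Fixpoint words (l : nat) : seq A :=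
  if l is l'.+1 then [seq x * w | x <- s, w <- words l'] else [:: 1].
Definition allw j := flatten [seq words l | l <- iota 0 j.+1].

Lemma mem_allw j w : w \in allw j <-> exists l, (l <= j)%N /\ w \in words l.
Proof.
split.
  by move=> /flattenP [ws /mapP [l lin ->] win]; exists l; split => //; move: lin; rewrite mem_iota.
move=> [l [lj win]]; apply/flattenP; exists (words l) => //; apply/mapP; exists l => //.
by rewrite mem_iota.
Qed.

Lemma words_G l w : w \in words l -> G l w.
Proof.
elim: l w => [|l IH] w /=; first by rewrite inE => /eqP ->; apply: G01.
move=> /allpairsP [[x u] [xin uin ->]] /=.
by rewrite -add1n; apply: GM => //; [apply: sG | apply: IH].
Qed.

Lemma words_mul l l' w w' : w \in words l -> w' \in words l' -> w * w' \in words (l + l').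
Proof.
elim: l w => [|l IH] w /=; first by rewrite inE => /eqP ->; rewrite mul1r.
move=> /allpairsP [[x u] [xin uin ->]] /= w'in; rewrite -mulrA ?addSn /=.
by apply/allpairsP; exists (x, u * w'); split => //; apply: IH.
Qed.

Lemma T_all a : exists N, ispan (allw N) a.
Proof.
apply: (genG (S := fun a => exists N, ispan (allw N) a)).
- split.
  + by exists 0%N; apply: ispan_mem; apply/mem_allw; exists 0%N; rewrite inE eqxx.
  + split; first by exists 0%N; constructor.
    move=> c x y [N hx] [M hy]; exists (maxn N M); apply: ispan_lin.
      apply: ispan_sub hx => w /mem_allw [l [lj win]]; apply/mem_allw; exists l; split => //.
      by apply: leq_trans lj (leq_maxl _ _).
    apply: ispan_sub hy => w /mem_allw [l [lj win]]; apply/mem_allw; exists l; split => //.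
    by apply: leq_trans lj (leq_maxr _ _).
  + move=> x y [N hx] [M hy]; exists (N + M)%N; apply: ispan_mul hx hy.
    move=> w w' /mem_allw [l [lj win]] /mem_allw [l' [lj' win']]; apply/mem_allw.
    by exists (l + l')%N; split; [apply: leq_add | apply: words_mul].
- move=> x Gx; exists 1%N; apply: ispan_sub (Gs Gx) => w win; apply/mem_allw.
  exists 1%N; split; first done; apply/allpairsP; exists (w, 1); split => //=; last by rewrite mulr1.
  by rewrite inE.
Qed.

Lemma comp_words N i a : ispan (allw N) a -> ispan (words i) (comp hG i a).
Proof.
apply: (ispan_ind2 (X := fun a => ispan (words i) (comp hG i a))).
- by rewrite comp0; constructor.
- by move=> c x y hx hy; rewrite comp_lin; apply: ispan_lin.
- move=> x /mem_allw [l [_ win]]; rewrite (comp_hom hG i (words_G win)).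
  by case: eqP => [->|_]; [apply: ispan_mem | constructor].
Qed.

Lemma span_Le j a : Le hG j a -> ispan (allw j) a.
Proof.
move=> ha; rewrite -(tr_Le ha) /tr.
have [N hN] := T_all a.
apply: (big_ind (ispan (allw j))); first by constructor.
  by move=> *; apply: ispan_add.
move=> i _; apply: ispan_sub (comp_words i hN) => w win; apply/mem_allw.
by exists i; split => //; rewrite -ltnS.
Qed.

Lemma allw_Le j w : w \in allw j -> Le hG j w.
Proof. by move=> /mem_allw [l [lj win]]; exact: (Le_mono lj (G_Le hG (words_G win))). Qed.

End Span.

Lemma fd_ispan (k : fieldType) (A : algType k) (X : A -> Prop) :
  finite_dimensional X -> exists s, (forall x, x \in s -> X x) /\ forall x, X x -> ispan s x.
Proof.
move=> [s [sX hs]]; exists s; split => // x /hs [c ->].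
apply: (big_ind (ispan s)); first by constructor.
  by move=> *; apply: ispan_add.
by move=> i _; apply: ispan_scale; apply: ispan_mem; apply: mem_nth.
Qed.


Section W.
Variables (k : fieldType) (A : algType k) (f : A -> A).
Hypothesis fD : forall x y, f (x - y) = f x - f y.
Hypothesis fM : forall x y, f (x * y) = f x * f y.
Hypothesis f1 : f 1 = 1.
Hypothesis fZ : forall (c : k) x, f (c *: x) = c *: f x.
Definition wrapf := f.
HB.instance Definition _ := GRing.isZmodMorphism.Build A A wrapf fD.
HB.instance Definition _ := GRing.isMonoidMorphism.Build A A wrapf (conj f1 fM).
HB.instance Definition _ := GRing.isScalable.Build k A A *:%R wrapf fZ.
Definition wrapL : {lrmorphism A -> A} := wrapf.
Lemma wrapLE x : wrapL x = f x. Proof. by []. Qed.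
End W.

Lemma trB (k : fieldType) (A : algType k) (G : nat -> A -> Prop) (hG : is_algebra_grading G) j x y :
  tr hG j (x - y) = tr hG j x - tr hG j y.
Proof. by rewrite /tr -sumrB; apply: eq_bigr => i _; rewrite compB. Qed.

Lemma tr_eqGe (k : fieldType) (A : algType k) (G : nat -> A -> Prop) (hG : is_algebra_grading G) j x y :
  Ge hG j.+1 (x - y) -> tr hG j x = tr hG j y.
Proof. by move=> h; apply/eqP; rewrite -subr_eq0 -trB tr_Ge. Qed.

Lemma subBB (V : zmodType) (a b c : V) : (a - b) - (a - c) = c - b.
Proof. by rewrite opprB addrC addrA subrK. Qed.

Section Main.
Variables (k : fieldType) (A : algType k) (G H : nat -> A -> Prop).
Variables (hG : is_algebra_grading G) (hH : is_algebra_grading H).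
Variables (dG : degree0_is_scalars G) (dH : degree0_is_scalars H).
Variables (genG : generates_algebra (G 1%N)) (genH : generates_algebra (H 1%N)).
Variable fdX : finite_dimensional (G 1%N) \/ finite_dimensional (H 1%N).

Lemma F1 j b : Le hH j b -> Ge hG j.+1 b -> b = 0.
Proof.
move=> Lb Gb.
have spanX : exists xs, (forall x, x \in xs -> Le hH j x) /\ forall a, Le hH j a -> ispan xs a.
  case: fdX => [fdG|fdH].
    have [s [sG Gs]] := fd_ispan fdG.
    exists (map (tr hH j) (allw s j)); split.
      by move=> x /mapP [y _ ->]; apply: Le_tr.
    move=> a La; have [g [Lg Gg]] := Dec hH hG dH dG genG a j.
    rewrite -(tr_Le La) (tr_eqGe Gg); apply: ispan_map; first exact: tr_lin.
    exact: (span_Le genG sG Gs Lg).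
  have [s [sH Hs]] := fd_ispan fdH.
  exists (allw s j); split; first exact: (allw_Le hH sH).
  by move=> a La; exact: (span_Le genH sH Hs La).
have [xs [xsX Xxs]] := spanX.
apply: (@surj_inj _ _ xs (Le hH j) (fun a => tr hH j (tr hG j a))) => //.
- by move=> c x y /=; rewrite !tr_lin.
- move=> a; split; first exact: Xxs.
  apply: ispan_ind2; first exact: Le0.
    by move=> *; apply: Le_lin.
  exact: xsX.
- by move=> x _; apply: Le_tr.
- move=> x Lx; have [g [Lg Gg]] := Dec hH hG dH dG genG x j.
  have [b' [Lb' Gb']] := Dec hG hH dG dH genH g j.
  exists b'; split => //=.
  by rewrite -(tr_eqGe Gb') (tr_Le Lg) -(tr_eqGe Gg) (tr_Le Lx).
- by rewrite /= (tr_Ge Gb); apply: big1 => i _; exact: comp0.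
Qed.

Lemma beta_ex j a : exists b, Le hH j b /\ Ge hG j.+1 (a - b).
Proof. exact: Dec hG hH dG dH genH a j. Qed.
Definition beta j a := proj1_sig (constructive_indefinite_description _ (beta_ex j a)).
Lemma beta_spec j a : Le hH j (beta j a) /\ Ge hG j.+1 (a - beta j a).
Proof. exact: (proj2_sig (constructive_indefinite_description _ (beta_ex j a))). Qed.

Lemma beta_uniq j a b : Le hH j b -> Ge hG j.+1 (a - b) -> beta j a = b.
Proof.
move=> Lb Gb; have [L1 G1] := beta_spec j a.
apply/eqP; rewrite -subr_eq0; apply/eqP; apply: (F1 (j := j)).
  exact: LeB.
have -> : beta j a - b = (a - b) - (a - beta j a) by rewrite subBB.
exact: GeB.
Qed.

Lemma beta_lin j (c : k) x y : beta j (c *: x + y) = c *: beta j x + beta j y.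
Proof.
have [L1 G1] := beta_spec j x; have [L2 G2] := beta_spec j y.
apply: beta_uniq; first exact: Le_lin.
have -> : c *: x + y - (c *: beta j x + beta j y) = c *: (x - beta j x) + (y - beta j y).
  by rewrite scalerBr opprD addrACA.
exact: Ge_lin.
Qed.

Definition f j a := comp hH j (beta j a).

Lemma f_lin j (c : k) x y : f j (c *: x + y) = c *: f j x + f j y.
Proof. by rewrite /f beta_lin comp_lin. Qed.
Lemma f0 j : f j 0 = 0.
Proof. exact: lin0 (@f_lin j). Qed.
Lemma fD j x y : f j (x + y) = f j x + f j y.
Proof. by have := f_lin j 1 x y; rewrite !scale1r. Qed.
Lemma f_big j (I : Type) (r : seq I) (P : pred I) (F : I -> A) :
  f j (\sum_(l <- r | P l) F l) = \sum_(l <- r | P l) f j (F l).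
Proof. exact: (big_morph (f j) (fD j) (f0 j)). Qed.

Lemma f_mul i j x y : G i x -> G j y -> f (i + j) (x * y) = f i x * f j y.
Proof.
move=> Gx Gy; rewrite /f.
have [L1 G1] := beta_spec i x; have [L2 G2] := beta_spec j y.
rewrite (@beta_uniq (i + j) (x * y) (beta i x * beta j y)).
- exact: LeM_top.
- exact: LeM.
have -> : x * y - beta i x * beta j y = x * (y - beta j y) + (x - beta i x) * beta j y.
  by rewrite mulrBr mulrBl addrA subrK.
apply: GeD.
  by rewrite -addnS; apply: GeM => //; apply: G_Ge.
rewrite -addSn; apply: GeM => //.
have -> : beta j y = y - (y - beta j y) by rewrite subKr.
by apply: GeB; [apply: G_Ge | apply: Ge_mono G2].
Qed.

Definition psi a := \sum_(j < bnd hG a) f j (comp hG j a).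

Lemma psiE a N : (bnd hG a <= N)%N -> psi a = \sum_(j < N) f j (comp hG j a).
Proof.
move=> aN; rewrite /psi (@sum_widen _ _ _ _ (fun j => f j (comp hG j a)) aN).
by apply: eq_bigr => j _; case: ltnP => // h; rewrite comp_ge // f0.
Qed.

Lemma psi_lin (c : k) x y : psi (c *: x + y) = c *: psi x + psi y.
Proof.
pose N := maxn (bnd hG (c *: x + y)) (maxn (bnd hG x) (bnd hG y)).
rewrite !(@psiE _ N) ?leq_maxl // ?(leq_trans (leq_maxl _ _) (leq_maxr _ _)) //
  ?(leq_trans (leq_maxr _ _) (leq_maxr _ _)) //.
rewrite scaler_sumr -big_split; apply: eq_bigr => j _.
by rewrite comp_lin f_lin.
Qed.

Lemma psi0 : psi 0 = 0. Proof. exact: lin0 psi_lin. Qed.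

Lemma psiB x y : psi (x - y) = psi x - psi y.
Proof. by rewrite addrC -scaleN1r psi_lin scaleN1r addrC. Qed.

Lemma psiZ (c : k) x : psi (c *: x) = c *: psi x.
Proof. by have := psi_lin c x 0; rewrite !addr0 psi0 addr0. Qed.

Lemma psi_hom i x : G i x -> psi x = f i x.
Proof.
move=> Gx; pose N := maxn (bnd hG x) i.+1.
have iN : (i < N)%N by rewrite leq_max ltnSn orbT.
rewrite (@psiE _ N) ?leq_maxl // (sum_single (Ordinal iN)) /= ?(comp_hom hG _ Gx) ?eqxx //.
by move=> j /negbTE ne; rewrite (comp_hom hG _ Gx) ne f0.
Qed.

Lemma compH_psi j a : comp hH j (psi a) = f j (comp hG j a).
Proof.
pose N := maxn (bnd hG a) j.+1.
have jN : (j < N)%N by rewrite leq_max ltnSn orbT.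
rewrite (@psiE _ N) ?leq_maxl // comp_big (sum_single (Ordinal jN)) /=.
  by rewrite (comp_hom hH _ (compG hH j _)) eqxx.
by move=> l ne; rewrite (comp_hom hH _ (compG hH l _)) eq_sym (negbTE ne).
Qed.

Lemma psi_one : psi 1 = 1.
Proof.
rewrite (psi_hom (G01 hG)) /f (@beta_uniq 0 1 1).
- by rewrite (comp_hom hH 0 (G01 hH)).
- exact: G_Le (G01 hH).
- by rewrite subrr; apply: Ge0.
Qed.

Lemma psi_mul x y : psi (x * y) = psi x * psi y.
Proof.
pose N := maxn (bnd hG x) (bnd hG y).
pose M := maxn (bnd hG (x * y)) (N + N).
have bx : (bnd hG x <= N)%N by apply: leq_maxl.
have byy : (bnd hG y <= N)%N by apply: leq_maxr.
rewrite (@psiE (x * y) M) ?leq_maxl // (psiE bx) (psiE byy) mulr_suml.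
under eq_bigr => p _ do rewrite (comp_mul p bx byy) f_big.
rewrite exchange_big /=; apply: eq_bigr => l _.
under eq_bigr => p _ do rewrite f_big.
rewrite exchange_big /= mulr_sumr; apply: eq_bigr => m _.
have lmM : (l + m < M)%N.
  apply: leq_trans (leq_maxr _ _); rewrite -addSn; apply: leq_add => //.
  exact: ltnW.
rewrite (sum_single (Ordinal lmM)) /= ?eqxx.
  by rewrite f_mul //; apply: compG.
by move=> p ne; rewrite eq_sym (negbTE ne) f0.
Qed.

Lemma f_inj j x : G j x -> f j x = 0 -> x = 0.
Proof.
move=> Gx fx; rewrite /f in fx; have [L1 G1] := beta_spec j x.
set b := beta j x in L1 G1 fx.
have Gb : Ge hG j b.
  have -> : b = x - (x - b) by rewrite subKr.
  by apply: GeB; [apply: G_Ge | apply: Ge_mono G1].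
have b0 : b = 0.
  clearbody b; move: Gx fx L1 G1 Gb; case: j => [|j] Gx fx L1 G1 Gb.
    by rewrite -(tr_Le L1) /tr big_ord1.
  apply: (F1 (j := j)) => //.
  move=> i ji; case: (ltngtP i j.+1) => [ltij|gtij|->] //.
  - by move: ji; rewrite ltnNge -ltnS ltij.
  - exact: L1.
move: G1; rewrite b0 subr0 => G1.
by have := G1 j (ltnSn j); rewrite (comp_hom hG _ Gx) eqxx.
Qed.

Lemma psi_inj0 a : psi a = 0 -> a = 0.
Proof.
move=> pa; rewrite (@comp_sum _ _ _ hG a (bnd hG a)) //.
apply: big1 => j _; apply: (@f_inj j); first exact: compG.
by rewrite -compH_psi pa comp0.
Qed.

Lemma psi_inj x y : psi x = psi y -> x = y.
Proof.
by move=> e; apply/eqP; rewrite -subr_eq0; apply/eqP; apply: psi_inj0; rewrite psiB e subrr.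
Qed.

Lemma psi_surj y : exists x, psi x = y.
Proof.
apply: (genH (S := fun y => exists x, psi x = y)).
- split; first by exists 1; apply: psi_one.
  + split; first by exists 0; apply: psi0.
    by move=> c u v [x <-] [x' <-]; exists (c *: x + x'); apply: psi_lin.
  + by move=> u v [x <-] [x' <-]; exists (x * x'); apply: psi_mul.
- move=> b Hb.
  have [e eE] : exists e : k, comp hG 0 b = e%:A by apply/dG; apply: compG.
  have He : H 0 (e%:A) by apply/dH; exists e.
  exists (comp hG 1 b); rewrite (psi_hom (compG hG 1 b)) /f.
  rewrite (@beta_uniq 1 (comp hG 1 b) (b - e%:A)).
  + by rewrite compB (comp_hom hH 1 Hb) (comp_hom hH 1 He) /= subr0.
  + by apply: LeB; [exact: G_Le Hb| exact: Le_G0 He 1%N].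
  + have -> : comp hG 1 b - (b - e%:A) = - (b - tr hG 1 b).
      rewrite /tr big_ord_recr big_ord1 /= eE.
      by rewrite !opprB addrA (addrC (comp hG 1 b)).
    by rewrite -scaleN1r; apply: GeZ; apply: Ge_sub_tr.
Qed.

Lemma psi_graded i y : H i y <-> exists x, G i x /\ psi x = y.
Proof.
split.
  move=> Hy; have [x0 e] := psi_surj y.
  exists (comp hG i x0); split; first exact: compG.
  by rewrite (psi_hom (compG hG i x0)) -compH_psi e (comp_hom hH _ Hy) eqxx.
move=> [x [Gx <-]]; rewrite (psi_hom Gx); exact: compG.
Qed.

End Main.


Unset Implicit Arguments.

Theorem corollary2 (k : fieldType) (A : algType k) (G H : nat -> A -> Prop) :
  is_algebra_grading G -> is_algebra_grading H ->
  degree0_is_scalars G -> degree0_is_scalars H ->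
  generates_algebra (G 1%N) -> generates_algebra (H 1%N) ->
  finite_dimensional (G 1%N) \/ finite_dimensional (H 1%N) ->
  exists phi : {lrmorphism A -> A}, bijective phi /\
    forall (i : nat) (y : A), H i y <-> exists x, G i x /\ phi x = y.
Proof.
move=> hG hH dG dH genG genH fdX.
exists (wrapL (psiB hG hH dG dH genG genH fdX) (psi_mul hG hH dG dH genG genH fdX)
  (psi_one hG hH dG dH genG genH fdX) (psiZ hG hH dG dH genG genH fdX)).
split.
  pose g y := proj1_sig (constructive_indefinite_description _ (psi_surj hG hH dG dH genG genH fdX y)).
  have gE y : psi hG hH dG dH genH (g y) = y.
    exact: (proj2_sig (constructive_indefinite_description _ (psi_surj hG hH dG dH genG genH fdX y))).
  exists g => x; rewrite wrapLE //.
  by apply: (psi_inj genG fdX); rewrite gE.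
move=> i y; have := psi_graded hG hH dG dH genG genH fdX i y.
by move=> ->; split => -[x [Gx e]]; exists x; split => //; rewrite ?wrapLE in e *.
Qed.
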